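(* Let $h_i$ be a strictly convex regularizer on $\mathcal{X}_i$ such that $\nabla h_i^*(y_i)>\mathbf{0}$ (coordinatewise) for all $y_i$. Then the map $g_i(x_i)=\nabla h_i(x_i)-[\nabla h_i(x_i)]_1\cdot\mathbf{1}$ is a bijection between the relative interior of $\mathcal{X}_i$ and $\mathcal{Y}_i=\{y_i\in\mathbb{R}^{S_i}: y_{i1}=0\}$.
   Context: $\mathcal{X}_i=\{x_i\in\mathbb{R}^{S_i}_{\ge0}:\sum_{s}x_{is}=1\}$ is the probability simplex; $\mathbf{1}$ is the all-ones vector and $[v]_1$ the first coordinate of $v$. $h_i$ is strictly convex and differentiable on the relative interior of $\mathcal{X}_i$ (gradient taken in $\mathbb{R}^{S_i}$); the learning rate is absorbed into $h_i$. Its convex conjugate is $h_i^*(y_i)=\sup_{x_i\in\mathcal{X}_i}\{\langle y_i,x_i\rangle-h_i(x_i)\}$, and $\nabla h_i^*(y_i)=\arg\max_{x_i\in\mathcal{X}_i}\{\langle y_i,x_i\rangle-h_i(x_i)\}$. *)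

(* Defs.v *)
From HB Require Import structures.
From mathcomp Require Import all_boot all_order all_algebra.
From mathcomp Require Import all_classical all_reals all_analysis.
Set Implicit Arguments. Unset Strict Implicit. Unset Printing Implicit Defensive.
Import Order.TTheory GRing.Theory Num.Theory.
Import numFieldNormedType.Exports.
Local Open Scope classical_set_scope.
Local Open Scope ring_scope.

Section Defs.
Variables (R : realType) (n : nat).

Definition dotv (y x : 'rV[R]_n) : R := \sum_(s < n) y 0 s * x 0 s.

Definition simplex : set 'rV[R]_n :=
  [set x | (forall s, 0 <= x 0 s) /\ \sum_(s < n) x 0 s = 1].

Definition relint_simplex : set 'rV[R]_n :=
  [set x | (forall s, 0 < x 0 s) /\ \sum_(s < n) x 0 s = 1].

Definition strictly_convex_on_simplex (h : 'rV[R]_n -> R) : Prop :=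
  forall x y t, x \in simplex -> y \in simplex -> x != y -> 0 < t < 1 ->
    h (t *: x + (1 - t) *: y) < t * h x + (1 - t) * h y.

Definition grad (h : 'rV[R]_n -> R) (x : 'rV[R]_n) : 'rV[R]_n :=
  \row_j ('d h x (delta_mx 0 j : 'rV[R]_n)).

(* x = grad h^*(y), i.e. x is the argmax over the simplex of <y,x> - h x. *)
Definition conj_argmax (h : 'rV[R]_n -> R) (y x : 'rV[R]_n) : Prop :=
  x \in simplex /\
  forall z, z \in simplex -> dotv y z - h z <= dotv y x - h x.

End Defs.

Definition gmap (R : realType) (n : nat) (h : 'rV[R]_n.+1 -> R)
  (x : 'rV[R]_n.+1) : 'rV[R]_n.+1 :=
  grad h x - (grad h x 0 ord0) *: const_mx 1.

Definition Yset (R : realType) (n : nat) : set 'rV[R]_n.+1 :=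
  [set y | y 0 ord0 = 0].

(* Main.v *)
Require Import Defs.
From HB Require Import structures.
From mathcomp Require Import all_boot all_order all_algebra.
From mathcomp Require Import all_classical all_reals all_analysis.
From mathcomp Require Import ring lra.
Import Order.TTheory GRing.Theory Num.Theory.
Import numFieldNormedType.Exports.
Local Open Scope classical_set_scope.
Local Open Scope ring_scope.
Set Implicit Arguments. Unset Strict Implicit.

Lemma dlim_ge (R : realType) (n : nat) (f : 'rV[R]_n -> R) a v c eps :
  differentiable f a -> 0 < eps ->
  (forall t, 0 < t < eps -> t * c <= f (a + t *: v) - f a) -> c <= 'd f a v.
Proof.
move=> df e0 H.
have /cvgP := diff_derivable df (v:=v).
rewrite -/(derive f a v) deriveE // => Hl.
rewrite leNgt; apply/negP => lc.
have := cvgr_lt _ Hl _ lc.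
move=> X; have {X} := X ltac:(typeclasses eauto).
rewrite -nbhs_nearE /within => /nbhs_ballP[e /= e0' He].
pose t := Num.min e eps / 2.
have t0 : 0 < t by rewrite divr_gt0 // lt_min e0 e0'.
have tm : t < Num.min e eps by rewrite /t ltr_pdivrMr // ltr_pMr ?lt_min ?e0 ?e0' // ltr1n.
have := He t.
rewrite /ball /= sub0r normrN gtr0_norm //.
move: tm; rewrite lt_min => /andP[te teps].
move=> /(_ te (lt0r_neq0 t0)) /=.
rewrite /shift.
move: (H t); rewrite t0 teps => /(_ isT) Ht.
rewrite ltr_pdivrMl //.
by rewrite (addrC (t *: v)) ltNge Ht.
Qed.

Lemma d_grad (R : realType) (n : nat) (h : 'rV[R]_n -> R) x v :
  'd h x v = \sum_(j < n) v 0 j * grad h x 0 j.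
Proof.
rewrite {1}(row_sum_delta v) linear_sum; apply: eq_bigr => j _.
by rewrite linearZ /grad mxE.
Qed.

Lemma conv_le (R : realType) (n : nat) (h : 'rV[R]_n -> R) (a b : 'rV[R]_n) t :
  strictly_convex_on_simplex h -> a \in @simplex R n -> b \in @simplex R n ->
  0 <= t <= 1 -> h (t *: a + (1 - t) *: b) <= t * h a + (1 - t) * h b.
Proof.
move=> hc ha hb /andP[t0 t1].
have [->|nab] := eqVneq a b.
  by rewrite -scalerDl -mulrDl [t + _]addrC subrK !scale1r mul1r.
have [->|nt0] := eqVneq t 0.
  by rewrite !scale0r !mul0r !add0r subr0 scale1r mul1r.
have [->|nt1] := eqVneq t 1.
  by rewrite subrr !scale0r !mul0r !addr0 scale1r mul1r.
apply/ltW/hc => //.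
by rewrite lt0r nt0 t0 /= lt_neqAle nt1 t1.
Qed.

Lemma sum_delta (R : realType) (n : nat) (j : 'I_n) :
  \sum_(s < n) (delta_mx 0 j : 'rV[R]_n) 0 s = 1.
Proof.
rewrite (bigD1 j) //= big1 ?addr0; first by rewrite mxE !eqxx.
by move=> s /negbTE sj; rewrite mxE sj andbF.
Qed.

Lemma simplex_comb (R : realType) (n : nat) (a b : 'rV[R]_n) t :
  a \in @simplex R n -> b \in @simplex R n -> 0 <= t <= 1 ->
  t *: a + (1 - t) *: b \in @simplex R n.
Proof.
rewrite !inE => -[a0 a1] [b0 b1] /andP[t0 t1]; split.
  move=> s; rewrite !mxE addr_ge0 // mulr_ge0 //; by rewrite subr_ge0.
under eq_bigr do rewrite !mxE.
by rewrite big_split /= -!mulr_sumr a1 b1 !mulr1 [t + _]addrC subrK.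
Qed.

Lemma simplex_shift (R : realType) (n : nat) (x d : 'rV[R]_n) t :
  x \in @simplex R n -> \sum_(s < n) d 0 s = 0 ->
  (forall s, 0 <= x 0 s + t * d 0 s) -> x + t *: d \in @simplex R n.
Proof.
rewrite !inE => -[x0 x1] d0 H; split.
  by move=> s; rewrite !mxE.
under eq_bigr do rewrite !mxE.
by rewrite big_split /= -mulr_sumr x1 d0 mulr0 addr0.
Qed.

Lemma dlim_le (R : realType) (n : nat) (f : 'rV[R]_n -> R) a v c eps :
  differentiable f a -> 0 < eps ->
  (forall t, 0 < t < eps -> f (a + t *: v) - f a <= t * c) -> 'd f a v <= c.
Proof.
move=> df e0 H.
have /cvgP := diff_derivable df (v:=v).
rewrite -/(derive f a v) deriveE // => Hl.
rewrite leNgt; apply/negP => lc.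
have := cvgr_gt _ Hl _ lc.
move=> X; have {X} := X ltac:(typeclasses eauto).
rewrite -nbhs_nearE /within => /nbhs_ballP[e /= e0' He].
pose t := Num.min e eps / 2.
have t0 : 0 < t by rewrite divr_gt0 // lt_min e0 e0'.
have tm : t < Num.min e eps by rewrite /t ltr_pdivrMr // ltr_pMr ?lt_min ?e0 ?e0' // ltr1n.
have := He t.
rewrite /ball /= sub0r normrN gtr0_norm //.
move: tm; rewrite lt_min => /andP[te teps].
move=> /(_ te (lt0r_neq0 t0)) /=.
rewrite /shift.
move: (H t); rewrite t0 teps => /(_ isT) Ht.
rewrite ltr_pdivlMl //.
by rewrite (addrC (t *: v)) ltNge Ht.
Qed.

Lemma strict_first (R : realType) (n : nat) (h : 'rV[R]_n -> R) (a b : 'rV[R]_n) :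
  strictly_convex_on_simplex h -> a \in @simplex R n -> b \in @simplex R n ->
  a != b -> differentiable h a -> 'd h a (b - a) < h b - h a.
Proof.
move=> hc ha hb nab da.
set m := 2^-1 *: b + (1 - 2^-1) *: a.
have hm : h m < 2^-1 * h b + (1 - 2^-1) * h a.
  by apply: hc => //; [rewrite eq_sym | lra].
have hmS : m \in @simplex R n by apply: simplex_comb => //; lra.
have e0 : (0 : R) < 2^-1 by lra.
have := @dlim_le R n h a (b - a) (2 * (h m - h a)) 2^-1 da e0.
have Hs : forall t, 0 < t < 2^-1 -> h (a + t *: (b - a)) - h a <= t * (2 * (h m - h a)).
  move=> t /andP[t0 t1].
  have -> : a + t *: (b - a) = (2*t) *: m + (1 - 2*t) *: a.
    apply/rowP => i; rewrite /m !mxE; by field.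
  have : 0 <= 2 * t <= 1 by apply/andP; split; lra.
  move=> /(@conv_le R n h _ _ _ hc hmS ha) H2; lra.
move=> /(_ Hs) H3; lra.
Qed.

Lemma dotvDZ (R : realType) (n : nat) (y u w : 'rV[R]_n) t :
  dotv y (u + t *: w) = dotv y u + t * dotv y w.
Proof.
rewrite /dotv mulr_sumr -big_split; apply: eq_bigr => s _; rewrite !mxE /=; ring.
Qed.

Lemma dotvB (R : realType) (n : nat) (y u w : 'rV[R]_n) :
  dotv y (u - w) = dotv y u - dotv y w.
Proof.
rewrite /dotv -sumrB; apply: eq_bigr => s _; rewrite !mxE /=; ring.
Qed.

Lemma dot_delta (R : realType) (n : nat) (y : 'rV[R]_n) j :
  dotv y (delta_mx 0 j) = y 0 j.
Proof.
rewrite /dotv (bigD1 j) //= big1 ?addr0; first by rewrite mxE !eqxx mulr1.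
by move=> s /negbTE sj; rewrite mxE sj andbF mulr0.
Qed.

Lemma gmapE (R : realType) (n : nat) (h : 'rV[R]_n.+1 -> R) x j :
  gmap h x 0 j = grad h x 0 j - grad h x 0 ord0.
Proof. by rewrite /gmap /grad !mxE mulr1. Qed.


Lemma d_delta_diff (R : realType) (n : nat) (h : 'rV[R]_n -> R) x (j k : 'I_n) :
  'd h x (delta_mx 0 j - delta_mx 0 k) = grad h x 0 j - grad h x 0 k.
Proof. by rewrite linearB /grad !mxE. Qed.

Lemma dZ (R : realType) (n : nat) (h : 'rV[R]_n -> R) x (v : 'rV[R]_n) (s : R) :
  'd h x (s *: v) = s * 'd h x v.
Proof. by rewrite linearZ. Qed.

Lemma dotvZ (R : realType) (n : nat) (y v : 'rV[R]_n) s :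
  dotv y (s *: v) = s * dotv y v.
Proof. by rewrite -[s *: v]add0r dotvDZ [dotv y 0]big1 ?add0r // => i _; rewrite mxE mulr0. Qed.

Lemma dy_lem (R : realType) (n : nat) (y : 'rV[R]_n.+1) j :
  y 0 ord0 = 0 -> dotv y (delta_mx 0 j - delta_mx 0 ord0) = y 0 j.
Proof. by move=> y0; rewrite dotvB !dot_delta y0 subr0. Qed.

Lemma fin_alg (R : realType) (D1 D2 D e1 e2 e G yj : R) :
  e1 <= D1 -> e2 <= D2 -> D1 = 1 * D -> D2 = -1 * D -> e1 = 1 * e -> e2 = -1 * e ->
  D = G -> e = yj -> G = yj.
Proof. move=> *; lra. Qed.

Lemma inj_fin (R : realType) (A B p q : R) : A < q - p -> B < p - q -> A + B = 0 -> False.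
Proof. move=> *; lra. Qed.

Lemma inj_alg (R : realType) (n : nat) (a b ga gb : 'rV[R]_n.+1) :
  (forall j, ga 0 j - ga 0 ord0 = gb 0 j - gb 0 ord0) ->
  \sum_(j < n.+1) a 0 j = 1 -> \sum_(j < n.+1) b 0 j = 1 ->
  \sum_(j < n.+1) (b - a) 0 j * ga 0 j + \sum_(j < n.+1) (a - b) 0 j * gb 0 j = 0.
Proof.
move=> Hg ha hb; rewrite -big_split /=.
transitivity (\sum_(j < n.+1) (b 0 j - a 0 j) * (ga 0 ord0 - gb 0 ord0)).
  apply: eq_bigr => j _; rewrite !mxE.
  have E : ga 0 j - gb 0 j = ga 0 ord0 - gb 0 ord0 by have := Hg j; lra.
  rewrite -E /=; ring.
by rewrite -mulr_suml sumrB hb ha subrr mul0r.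
Qed.

Lemma argmax_dir (R : realType) (n : nat) (h : 'rV[R]_n -> R) y x v eps :
  differentiable h x -> 0 < eps ->
  (forall z, z \in @simplex R n -> dotv y z - h z <= dotv y x - h x) ->
  (forall t, 0 < t < eps -> x + t *: v \in @simplex R n) ->
  dotv y v <= 'd h x v.
Proof.
move=> dx e0 xmax Hs; apply: (@dlim_ge R n h x v _ eps dx e0) => t tt.
have := xmax _ (Hs t tt); rewrite dotvDZ; lra.
Qed.

Lemma shift_mem (R : realType) (n : nat) (x : 'rV[R]_n.+1) j t (sg : R) :
  x \in @simplex R n.+1 -> (forall s, 0 < x 0 s) -> sg = 1 \/ sg = -1 ->
  0 < t < Num.min (x 0 j) (x 0 ord0) ->
  x + t *: (sg *: (delta_mx 0 j - delta_mx 0 ord0)) \in @simplex R n.+1.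
Proof.
move=> xS xpos hsg /andP[t0]; rewrite lt_min => /andP[tj t0'].
apply: simplex_shift => //.
  have E : forall s, (sg *: (delta_mx 0 j - delta_mx 0 ord0) : 'rV[R]_n.+1) 0 s =
      sg * ((delta_mx 0 j : 'rV[R]_n.+1) 0 s - (delta_mx 0 ord0 : 'rV[R]_n.+1) 0 s).
    by move=> s; rewrite mxE; congr (_ * _); rewrite {1}mxE; congr (_ + _); rewrite mxE.
  by rewrite (eq_bigr _ (fun s _ => E s)) -mulr_sumr sumrB !sum_delta subrr mulr0.
move=> s; rewrite !mxE /=; move: (xpos s).
by case: eqP => [->|_]; case: eqP => [->|_] /= xs; case: hsg => ->; lra.
Qed.

Unset Implicit Arguments.
Theorem lemma1 (R : realType) (n : nat) (h : 'rV[R]_n.+1 -> R) :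
  strictly_convex_on_simplex h ->
  (forall x, @relint_simplex R n.+1 x -> differentiable h x) ->
  (forall y : 'rV[R]_n.+1, exists x, conj_argmax h y x /\ forall s, 0 < x 0 s) ->
  set_bij (@relint_simplex R n.+1) (@Yset R n) (gmap h).
Proof.
move=> hc hd hex; split.
- by move=> x _; rewrite /Yset /gmap /= !mxE /= mulr1 subrr.
- move=> a b; rewrite !inE => ha hb eqg.
  have [//|nab] := eqVneq a b; exfalso.
  have haS : a \in @simplex R n.+1.
    by rewrite inE; split; [move=> s; exact: ltW (ha.1 s) | exact: ha.2].
  have hbS : b \in @simplex R n.+1.
    by rewrite inE; split; [move=> s; exact: ltW (hb.1 s) | exact: hb.2].
  have L1 := @strict_first R n.+1 h a b hc haS hbS nab (hd a ha).
  have L2 := @strict_first R n.+1 h b a hc hbS haS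
    (introN eqP (fun e => (negP nab) (introT eqP (esym e)))) (hd b hb).
  have Hg : forall j, grad h a 0 j - grad h a 0 ord0 = grad h b 0 j - grad h b 0 ord0.
    move=> j; have E1 := gmapE h a j; have E2 := gmapE h b j.
    rewrite eqg in E1; exact: (etrans (esym E1) E2).
  have S0 := inj_alg Hg ha.2 hb.2.
  apply: (inj_fin _ _ S0).
    by rewrite (d_grad h a (b - a)) in L1; exact: L1.
  by rewrite (d_grad h b (a - b)) in L2; exact: L2.
- move=> y /= y0.
  have [x [[xS xmax] xpos]] := hex y.
  have xR : relint_simplex x by move: xS; rewrite inE => -[_ ?]; split.
  exists x => //.
  have dx := hd x xR.
  apply/rowP => j.
  apply: etrans (gmapE h x j) _.
  have e0 : 0 < Num.min (x 0 j) (x 0 ord0) by rewrite lt_min !xpos.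
  have k1 := argmax_dir dx e0 xmax (fun t tt => @shift_mem R n x j t 1 xS xpos (or_introl erefl) tt).
  have k2 := argmax_dir dx e0 xmax (fun t tt => @shift_mem R n x j t (-1) xS xpos (or_intror erefl) tt).
  exact: (fin_alg k1 k2 (dZ _ _ _ _) (dZ _ _ _ _) (dotvZ _ _ _) (dotvZ _ _ _)
            (d_delta_diff h x j ord0) (dy_lem j y0)).
Qed.
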